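(* Let $H_1$ and $H_2$ be graphs. If $\operatorname{obs}^\ast(H_1)\cap\operatorname{obs}^\ast(H_2)\ne\varnothing$ (up to isomorphism), then $H_1\cong H_2$.
   Context: All graphs are finite, simple and loopless. A full-homomorphism $\varphi\colon G\to H$ is a map $V(G)\to V(H)$ such that for all $x,y\in V(G)$, $xy\in E(G)$ if and only if $\varphi(x)\varphi(y)\in E(H)$. A full $H$-colouring of $G$ is a full-homomorphism $G\to H$. A minimal $H$-obstruction is a graph $G$ that admits no full $H$-colouring while every proper induced subgraph of $G$ admits one; $\operatorname{obs}(H)$ denotes the set of minimal $H$-obstructions (up to isomorphism), and $\operatorname{obs}^\ast(H)$ the set of minimal $H$-obstructions on exactly $|V(H)|+1$ vertices. *)

(* Defs.v *)
From mathcomp Require Import all_boot.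
Set Implicit Arguments. Unset Strict Implicit. Unset Printing Implicit Defensive.

Record graph := Graph {
  vertex :> finType;
  adj : rel vertex;
  adj_sym : symmetric adj;
  adj_irr : irreflexive adj }.

Definition full_hom (G H : graph) (phi : G -> H) : Prop :=
  forall x y : G, adj (phi x) (phi y) = adj x y.

Definition full_colourable (G H : graph) : Prop :=
  exists phi : G -> H, full_hom phi.

Definition induced (G : graph) (S : {set G}) : graph :=
  @Graph {x : G | x \in S} (fun x y => adj (val x) (val y))
    (fun x y => adj_sym (val x) (val y)) (fun x => adj_irr (val x)).

Definition minimal_obstruction (H G : graph) : Prop :=
  ~ full_colourable G H /\
  forall S : {set G}, S \proper [set: G] -> full_colourable (induced S) H.

Definition in_obs_star (H G : graph) : Prop :=
  minimal_obstruction H G /\ #|G| = #|H|.+1.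

Definition graph_iso (G H : graph) : Prop :=
  exists phi : G -> H, bijective phi /\ full_hom phi.

(* Main.v *)
Require Import Defs.
From mathcomp Require Import all_boot.

Definition pd_off {G : graph} (v : G) := forall x y : G, x != v -> y != v ->
  (forall z, z != v -> adj x z = adj y z) -> x = y.

Lemma pd_twin (H G : graph) : minimal_obstruction H G ->
  forall u w : G, (forall z, adj u z = adj w z) -> u = w.
Proof.
move=> [nc min] u w tw; apply/eqP; apply: contraT => neq.
pose S := [set: G] :\ u.
have wS : w \in S by rewrite !inE eq_sym neq.
have pS : S \proper [set: G].
  by rewrite properT; apply/eqP => /setP/(_ u); rewrite !inE eqxx.
have [phi fphi] := min S pS.
pose s0 : induced S := Sub w wS.
pose sig z := if z == u then w else z.
have sigS z : sig z \in S.
  by rewrite /sig; case: eqP => [_|/eqP zu] //; rewrite !inE zu.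
have sadj a b : adj (sig a) (sig b) = adj a b.
  rewrite /sig; case: (eqVneq a u) => [->|au]; case: (eqVneq b u) => [->|bu];
    rewrite ?eqxx ?(negbTE au) ?(negbTE bu).
  - by rewrite !adj_irr.
  - by rewrite tw.
  - by rewrite adj_sym -tw adj_sym.
  - by [].
case: nc; exists (fun z => phi (insubd s0 (sig z))) => a b.
by rewrite fphi /= !val_insubd !sigS.
Qed.

Lemma sumner (G : graph) (x0 : G) :
  (forall u w : G, (forall z, adj u z = adj w z) -> u = w) ->
  exists v : G, pd_off v.
Proof.
move=> pd.
pose Q (v : G) (xy : G * G) := [&& xy.1 != v, xy.2 != v, xy.1 != xy.2 &
   [forall z, (z != v) ==> (adj xy.1 z == adj xy.2 z)]].
case: (boolP [forall v, [exists xy, Q v xy]]) => [/forallP allP | ]; last first.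
  move/forallPn => [v nPv]; exists v => x y xv yv agr; apply/eqP.
  apply: contraT => nxy; case/negP: nPv; apply/existsP; exists (x, y).
  rewrite /Q /= xv yv nxy /=; apply/forallP => z; apply/implyP => zv.
  by apply/eqP; exact: agr.
pose pr v := odflt (x0, x0) [pick xy | Q v xy].
have prQ v : Q v (pr v).
  rewrite /pr; case: pickP => [xy //|none].
  by have /existsP [xy] := allP v; rewrite none.
pose F (T : {ffun G -> bool}) : {ffun G -> bool} :=
  [ffun x => odd #|[set z | T z && adj x z]|].
have cardsplit (T : {ffun G -> bool}) v u : #|[set z | T z && adj u z]| =
    (T v && adj u v) + #|[set z | (z != v) && T z && adj u z]|.
  rewrite (cardsD1 v [set z | T z && adj u z]) inE; congr (_ + _).
  by apply: eq_card => z; rewrite !inE andbA.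
have key (v : G) (T : {ffun G -> bool}) : T v = (F T (pr v).1 != F T (pr v).2).
  have /and4P [xv yv nxy /forallP agr] := prQ v.
  move: (pr v) xv yv nxy agr => [x y] /= xv yv nxy agr.
  have dv : adj y v = ~~ adj x v.
    case: (boolP (adj x v == adj y v)) => [/eqP e|]; last by case: (adj x v); case: (adj y v).
    case/negP: nxy; apply/eqP; apply: pd => z; case: (eqVneq z v) => [->//|zv].
    by have /implyP /(_ zv) /eqP := agr z.
  rewrite !ffunE (cardsplit T v x) (cardsplit T v y).
  have -> : #|[set z | (z != v) && T z && adj x z]| = #|[set z | (z != v) && T z && adj y z]|.
    apply: eq_card => z; rewrite !inE; case: (eqVneq z v) => //= zv.
    by have /implyP /(_ zv) /eqP -> := agr z.
  rewrite !oddD dv; move: (odd #|_|) => k.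
  by case: (T v); case: (adj x v); case: k.
have Finj : injective F.
  by move=> T1 T2 e; apply/ffunP => v; rewrite key e -key.
have [Fi FK FiK] := injF_bij Finj.
pose g : {ffun G -> bool} := [ffun => true].
have T0 v : Fi g v = false by rewrite key FiK !ffunE.
have := congr1 (fun f : {ffun G -> bool} => f x0) (FiK g).
rewrite /F !ffunE.
have -> : [set z | Fi g z && adj x0 z] = set0 by apply/setP => z; rewrite !inE T0.
by rewrite cards0.
Qed.

Lemma key (H G : graph) (v : G) (a0 : H) : in_obs_star H G -> pd_off v ->
  exists (h : H -> G) (g : G -> H), [/\ forall a, h a != v,
    forall a, g (h a) = a, forall x, x != v -> h (g x) = x &
    forall a b, adj (h a) (h b) = adj a b].
Proof.
move=> [[nc min] cG] pdv.
pose S := [set: G] :\ v.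
have pS : S \proper [set: G].
  by rewrite properT; apply/eqP => /setP/(_ v); rewrite !inE eqxx.
have [phi fphi] := min S pS.
have valv (a : induced S) : val a != v.
  by have := valP a; rewrite !inE => /andP[].
have phi_inj : injective phi.
  move=> a b e; apply: val_inj; apply: pdv; rewrite ?valv // => z zv.
  have zS : z \in S by rewrite !inE zv.
  have -> : adj (val a) z = @adj (induced S) a (Sub z zS) by [].
  have -> : adj (val b) z = @adj (induced S) b (Sub z zS) by [].
  by rewrite -fphi e fphi.
have cS : #|induced S| = #|H|.
  have := cardsD1 v [set: G]; rewrite cardsT in_setT cG /= => [[]] ->.
  by rewrite /= card_sig; apply: eq_card => x; rewrite !inE.
have [phi' K1 K2] := inj_card_bij phi_inj (eq_leq (esym cS)).
exists (fun a => val (phi' a)), (fun x => odflt a0 (omap phi (insub x))).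
split.
- by move=> a; apply: valv.
- by move=> a; rewrite valK /= K2.
- move=> x xv; case: insubP => [u _ <- /=|]; first by rewrite K1.
  by rewrite !inE xv.
- move=> a b; have := fphi (phi' a) (phi' b); rewrite !K2 => ->; by [].
Qed.

Theorem corollary3p6 (H1 H2 G1 G2 : graph) :
  in_obs_star H1 G1 -> in_obs_star H2 G2 -> graph_iso G1 G2 ->
  graph_iso H1 H2.
Proof.
move=> o1 o2 [f [fb ff]].
have cG := bij_eq_card fb.
have cH : #|H1| = #|H2|.
  by move: cG; rewrite o1.2 o2.2 => -[].
case: (posnP #|H1|) => [H10 | H1p].
  have e1 : H1 -> False.
    move=> a; have : 0 < #|H1| by apply/card_gt0P; exists a.
    by rewrite H10.
  have e2 : H2 -> False.
    move=> a; have : 0 < #|H2| by apply/card_gt0P; exists a.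
    by rewrite -cH H10.
  exists (fun a => False_rect _ (e1 a)); split.
    by exists (fun a => False_rect _ (e2 a)) => a; [case: (e1 a) | case: (e2 a)].
  by move=> a; case: (e1 a).
have [a1 _] := card_gt0P H1p.
have [a2 _] : exists a : H2, a \in H2 by apply/card_gt0P; rewrite -cH.
have [x0 _] : exists x : G1, x \in G1 by apply/card_gt0P; rewrite o1.2.
have [v pdv] := @sumner _ x0 (@pd_twin _ _ o1.1).
case: fb => f' fK f'K.
have pdw : pd_off (f v).
  move=> x y xv yv agr; rewrite -[x]f'K -[y]f'K; congr f; apply: pdv.
  - by apply: contraNneq xv => <-; rewrite f'K.
  - by apply: contraNneq yv => <-; rewrite f'K.
  move=> z zv; rewrite -ff -(ff (f' y)) !f'K; apply: agr.
  by rewrite (inj_eq (can_inj fK)).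
have [h1 [g1 [h1v gh1 hg1 fh1]]] := @key _ _ _ a1 o1 pdv.
have [h2 [g2 [h2v gh2 hg2 fh2]]] := @key _ _ _ a2 o2 pdw.
have fhv a : f (h1 a) != f v by rewrite (inj_eq (can_inj fK)).
exists (fun a => g2 (f (h1 a))); split.
  exists (fun b => g1 (f' (h2 b))) => [a|b].
    by rewrite hg2 ?fK ?gh1.
  have : f' (h2 b) != v by apply: contraNneq (h2v b) => <-; rewrite f'K.
  by move=> nv; rewrite hg1 // f'K gh2.
move=> a b.
by rewrite -fh2 !hg2 // ff fh1.
Qed.
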